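(* Let $Q\in\mathbb{R}^{n\times n}$ be symmetric positive definite, let $g\in\mathbb{R}^n$, let $\sigma\in(0,1/2]$ and $tol\ge 0$, and let the initial active set $A\subseteq\{1,\dots,n\}$ be arbitrary. Then the generic random active set method (described in the context) stops after finitely many iterations with probability $1$.
   Context: Consider the problem $\min_{x\in\mathbb{R}^n}\tfrac12 x^TQx+g^Tx$ subject to $x\ge 0$. For index sets $A,B\subseteq\{1,\dots,n\}$, $x_A$ denotes the subvector of $x$ indexed by $A$ and $Q_{A,B}$ the submatrix with rows in $A$ and columns in $B$. For a finite index set $S$ and a vector $p=(p_j)_{j\in S}$ of probabilities, $\mathrm{rand}(S,p)$ denotes a random subset of $S$ containing each $j\in S$ independently with probability $p_j$. Generic random active set method (RAS): Step 0: given $\sigma\in(0,1/2]$, an initial active set $A$, $I=\{1,\dots,n\}\setminus A$, and $tol\ge 0$. Step 1: compute $x_I=-Q_{I,I}^{-1}g_I$ and $s_A=Q_{A,I}x_I+g_A$; set $Im=\{i\in I: x_i\le 0\}$, $Am=\{j\in A: s_j<-tol\}$, $Ip=I\setminus Im$, $Ap=A\setminus Am$. Step 2: if $Im\cup Am=\emptyset$, stop. Otherwise choose (possibly depending on the whole history) vectors $p_{Im}\in\mathbb{R}^{|Im|}$, $p_{Am}\in\mathbb{R}^{|Am|}$ with every entry in $[\sigma,1-\sigma]$, and let $Imc=\mathrm{rand}(Im,p_{Im})$, $Imf=Im\setminus Imc$, $Amc=\mathrm{rand}(Am,p_{Am})$, $Amf=Am\setminus Amc$ (fresh independent randomness at each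 iteration). Step 3: set $I\leftarrow Ip\cup Imf\cup Amc$, $A\leftarrow Ap\cup Amf\cup Imc$, and return to Step 1. *)

(* Defs.v *)
From HB Require Import structures.
From mathcomp Require Import all_boot all_order all_algebra.
From mathcomp Require Import all_classical all_reals all_analysis.
Set Implicit Arguments. Unset Strict Implicit. Unset Printing Implicit Defensive.
Import Order.TTheory GRing.Theory Num.Theory.
Local Open Scope ring_scope.

(* For an index set I, the
   k-th element (k : 'I_#|I|) of I in increasing order is enum_val k; the
   submatrix Q_{I,I} and subvector g_I are taken w.r.t. this enumeration. *)

Section RAS.
Variables (R : realType) (n : nat).
Implicit Types (Q : 'M[R]_n) (g : 'cV[R]_n) (A : {set 'I_n}).

Definition subQ Q (I : {set 'I_n}) : 'M[R]_#|I| :=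
  \matrix_(i, j) Q (enum_val i) (enum_val j).

Definition xI Q g A : 'cV[R]_#|~: A| :=
  - (invmx (subQ Q (~: A)) *m \col_i g (enum_val i) 0).

Definition sA Q g A (j : 'I_n) : R :=
  \sum_(k < #|~: A|) Q j (enum_val k) * xI Q g A k 0 + g j 0.

Definition Imset Q g A : {set 'I_n} :=
  [set (enum_val k : 'I_n) | k in [pred k : 'I_#|~: A| | xI Q g A k 0 <= 0]].

Definition Amset Q g (tol : R) A : {set 'I_n} :=
  [set j in A | sA Q g A j < - tol].

Definition ras_stop Q g tol A : bool := Imset Q g A :|: Amset Q g tol A == finset.set0 :> {set 'I_n}.

(* Probability that one iteration (Steps 2-3) moves the active set from A to
   A', when the coin of index j (j in Im \cup Am) has success probability p j.
   The flipped indices S = Imc \cup Amc are exactly the symmetric difference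
   of A and A' (Imc joins A, Amc leaves A), so the transition has probability
   prod_{j in S} p_j * prod_{j in (Im \cup Am) \ S} (1 - p_j) if S is
   contained in Im \cup Am, and 0 otherwise. *)
Definition ras_trans Q g tol (p : 'I_n -> R) A (A' : {set 'I_n}) : R :=
  let D := Imset Q g A :|: Amset Q g tol A in
  let S := (A :\: A') :|: (A' :\: A) in
  if S \subset D then \prod_(j in D) (if j \in S then p j else 1 - p j) else 0.

(* Strategy: the probability vector chosen at an iteration may depend on the
   whole history, i.e. the list of previous active sets (which determines all
   previous random outcomes) and the current active set.
   ras_surv strat k h A = probability that, starting with past history h and
   current active set A, the method has NOT stopped within the next k
   iterations (i.e. none of the current and the next k active sets passes the
   stopping test). *)
Fixpoint ras_surv Q g tol (strat : seq {set 'I_n} -> {set 'I_n} -> 'I_n -> R)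
  (k : nat) (h : seq {set 'I_n}) A : R :=
  if ras_stop Q g tol A then 0 else
  match k with
  | 0 => 1
  | k'.+1 => \sum_(A' : {set 'I_n})
       ras_trans Q g tol (strat h A) A A' * ras_surv Q g tol strat k' (rcons h A) A'
  end.

End RAS.

(* Main.v *)
Require Import Defs.
From HB Require Import structures.
From mathcomp Require Import all_boot all_order all_algebra.
From mathcomp Require Import all_classical all_reals all_analysis.
From mathcomp Require Import ring lra zify.
Set Implicit Arguments. Unset Strict Implicit. Unset Printing Implicit Defensive.
Import Order.TTheory GRing.Theory Num.Theory.
Local Open Scope ring_scope.

Section Lin.
Variables (R : realType) (n : nat) (Q : 'M[R]_n) (g : 'cV[R]_n).

Definition qf (d : 'I_n -> R) := \sum_i \sum_j d i * Q i j * d j.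

Definition lift_ev (B : {set 'I_n}) (w : 'I_#|~: B| -> R) (i : 'I_n) : R :=
  \sum_(k < #|~: B|) (if enum_val k == i then w k else 0).

Lemma lift_ev_ev (B : {set 'I_n}) (w : 'I_#|~: B| -> R) k : lift_ev w (enum_val k) = w k.
Proof.
rewrite /lift_ev (bigD1 k) //= eqxx big1 ?addr0 // => l Hl.
by rewrite (inj_eq enum_val_inj) (negbTE Hl).
Qed.

Lemma lift_ev_B (B : {set 'I_n}) (w : 'I_#|~: B| -> R) i : i \in B -> lift_ev (B:=B) w i = 0.
Proof.
move=> Hi; rewrite /lift_ev big1 // => k _; case: eqP => // Hk.
by have := enum_valP k; rewrite Hk inE Hi.
Qed.

Lemma sum_lift (B : {set 'I_n}) (w : 'I_#|~: B| -> R) (F : 'I_n -> R) :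
  \sum_i F i * lift_ev (B:=B) w i = \sum_k F (enum_val k) * w k.
Proof.
rewrite /lift_ev; under eq_bigr do rewrite big_distrr.
rewrite exchange_big; apply eq_bigr => k _ /=.
rewrite (bigD1 (enum_val k)) //= eqxx big1 ?addr0 // => i Hi.
by rewrite eq_sym (negbTE Hi) mulr0.
Qed.

Hypothesis Qpd : forall v : 'cV[R]_n, v != 0 -> 0 < (v^T *m Q *m v) 0 0.

Lemma qf_pos d i0 : d i0 != 0 -> 0 < qf d.
Proof.
move=> di0.
have v0 : (\col_i d i) != 0.
  apply/negP => /eqP /matrixP /(_ i0 0); rewrite !mxE => Hd.
  by rewrite Hd eqxx in di0.
have := Qpd v0; congr (0 < _).
rewrite !mxE /qf exchange_big; apply eq_bigr => j _.
rewrite !mxE big_distrl; apply eq_bigr => k _ /=.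
by rewrite !mxE.
Qed.

Lemma qf_ge0 d : 0 <= qf d.
Proof.
case: (pickP (fun i => d i != 0)) => [i Hi | H]; first exact/ltW/(qf_pos Hi).
rewrite /qf big1 // => i _; rewrite big1 // => j _.
by move/negbFE/eqP: (H i) ->; rewrite !mul0r.
Qed.

Lemma subQ_unit (B : {set 'I_n}) : subQ Q (~: B) \in unitmx.
Proof.
rewrite unitmxE unitfE; apply/negP => /det0P [v v0 vM].
have [k vk] : exists k, v 0 k != 0.
  apply/existsP; apply: contraNT v0; rewrite negb_exists => /forallP H.
  apply/eqP/matrixP => i j; rewrite mxE (ord1 i); exact/eqP/negbNE/H.
have := qf_pos (d := lift_ev (fun k => v 0 k)) (i0 := enum_val k).
rewrite lift_ev_ev => /(_ vk).
suff -> : qf (lift_ev (fun k => v 0 k)) = 0 by rewrite ltxx.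
rewrite /qf; set L := lift_ev _.
transitivity (\sum_i (\sum_j Q i j * L j) * L i).
  apply eq_bigr => i _; rewrite big_distrl; apply eq_bigr => j _ /=; ring.
rewrite sum_lift.
under eq_bigr do rewrite sum_lift.
transitivity (\sum_l (\sum_i v 0 i * subQ Q (~: B) i l) * v 0 l).
  under eq_bigr do rewrite big_distrl.
  rewrite exchange_big /=; apply eq_bigr => l _; rewrite big_distrl.
  by apply eq_bigr => i _ /=; rewrite /subQ mxE; ring.
apply big1 => l _.
move/matrixP: vM => /(_ 0 l); rewrite !mxE => ->; exact: mul0r.
Qed.


Definition xf (B : {set 'I_n}) : 'I_n -> R := lift_ev (fun k => xI Q g B k 0).
Definition grad (B : {set 'I_n}) i := \sum_j Q i j * xf B j + g i 0.

Lemma xf_B (B : {set 'I_n}) i : i \in B -> xf B i = 0.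
Proof. exact: lift_ev_B. Qed.

Lemma grad_off (B : {set 'I_n}) i : i \notin B -> grad B i = 0.
Proof.
move=> Hi; have Hi' : i \in ~: B by rewrite inE.
set M := subQ Q (~: B).
have MU := subQ_unit B.
have E : M *m xI Q g B = - \col_k g (enum_val k) 0.
  by rewrite /xI mulmxN mulmxA mulmxV // mul1mx.
set k := enum_rank_in Hi' i.
have Ek : enum_val k = i by rewrite /k enum_rankK_in.
move/matrixP: E => /(_ k 0); rewrite !mxE => E.
rewrite /grad /xf sum_lift.
have -> : \sum_k0 Q i (enum_val k0) * xI Q g B k0 0 = - g i 0.
  rewrite -{2}Ek -E; apply eq_bigr => l _; rewrite /M /subQ [in RHS]mxE; congr (Q _ _ * _); exact/esym/Ek.
by rewrite addNr.
Qed.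

Lemma sA_grad (B : {set 'I_n}) j : sA Q g B j = grad B j.
Proof. by rewrite /sA /grad /xf sum_lift. Qed.

Lemma Imset_eq (B : {set 'I_n}) : Imset Q g B = [set i | (i \notin B) && (xf B i <= 0)].
Proof.
apply/setP => i; rewrite inE; apply/imsetP/andP.
  move=> [k]; rewrite inE /= => Hk ->; split.
    by have := enum_valP k; rewrite inE.
  by rewrite /xf lift_ev_ev.
move=> [Hi Hx]; have Hi' : i \in ~: B by rewrite inE.
exists (enum_rank_in Hi' i); last by rewrite enum_rankK_in.
by rewrite inE /=; move: Hx; rewrite /xf -{1}(enum_rankK_in Hi' Hi') lift_ev_ev.
Qed.

Hypothesis Qsym : Q^T = Q.
Lemma Qs i j : Q i j = Q j i.
Proof. by rewrite -{1}Qsym mxE. Qed.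

Definition qo (z : 'I_n -> R) := qf z / 2 + \sum_i g i 0 * z i.

Lemma qf_add x d : qf (fun i => x i + d i) =
  qf x + 2 * \sum_i d i * (\sum_j Q i j * x j) + qf d.
Proof.
rewrite /qf.
have E : forall i j, (x i + d i) * Q i j * (x j + d j) =
  x i * Q i j * x j + (x i * Q i j * d j + d i * Q i j * x j) + d i * Q i j * d j.
  by move=> i j; ring.
under eq_bigr do under eq_bigr do rewrite E.
under eq_bigr do rewrite big_split big_split /=.
rewrite big_split big_split /=; congr (_ + _ + _).
under eq_bigr do rewrite big_split /=.
set T := \sum_i d i * (\sum_j Q i j * x j).
have H1 : \sum_i \sum_j x i * Q i j * d j = T.
  rewrite exchange_big /=; apply eq_bigr => j _; rewrite big_distrr /=.
  by apply eq_bigr => i _; rewrite Qs; ring.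
have H2 : \sum_i \sum_j d i * Q i j * x j = T.
  by apply eq_bigr => i _; rewrite big_distrr /=; apply eq_bigr => j _; ring.
rewrite big_split /= H1 H2; ring.
Qed.

Lemma qf_scale c d : qf (fun i => c * d i) = c ^+ 2 * qf d.
Proof.
rewrite /qf mulr_sumr; apply eq_bigr => i _; rewrite mulr_sumr.
by apply eq_bigr => j _; ring.
Qed.

Lemma q_ident (B : {set 'I_n}) z : (forall i, i \in B -> z i = 0) ->
  qo z = qo (xf B) + qf (fun i => z i - xf B i) / 2.
Proof.
move=> zB; set x := xf B; set d := fun i => z i - x i.
have Ez : qf z = qf (fun i => x i + d i).
  by rewrite /qf; apply eq_bigr => i _; apply eq_bigr => j _; rewrite /d !subrKC.
have H0 : \sum_i d i * (\sum_j Q i j * x j + g i 0) = 0.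
  apply big1 => i _; case: (boolP (i \in B)) => Hi.
    by rewrite /d zB // /x xf_B // subrr mul0r.
  by have := grad_off Hi; rewrite /grad -/x => ->; rewrite mulr0.
have H1 : \sum_i d i * (\sum_j Q i j * x j + g i 0) =
   \sum_i d i * (\sum_j Q i j * x j) + \sum_i g i 0 * z i - \sum_i g i 0 * x i.
  rewrite -big_split -sumrB /=; apply eq_bigr => i _; rewrite /d; ring.
rewrite /qo Ez qf_add; lra.
Qed.

End Lin.

Section LS.
Variables (R : realType) (n : nat) (Q : 'M[R]_n) (g : 'cV[R]_n).
Hypothesis Qpd : forall v : 'cV[R]_n, v != 0 -> 0 < (v^T *m Q *m v) 0 0.
Hypothesis Qsym : Q^T = Q.

Definition feas (B : {set 'I_n}) (y : 'I_n -> R) :=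
  (forall i, 0 <= y i) /\ (forall i, i \in B -> y i = 0).

Lemma J_le (B : {set 'I_n}) y : feas B y -> qo Q g (xf Q g B) <= qo Q g y.
Proof.
move=> [_ yB]; rewrite (q_ident g Qpd Qsym yB) lerDl.
by apply: divr_ge0 => //; apply: (qf_ge0 Qpd).
Qed.

Lemma line_search (B : {set 'I_n}) y : feas B y -> Imset Q g B != finset.set0 ->
  exists k, k \in Imset Q g B /\ exists y', feas (k |: B) y' /\
   qo Q g y' <= qo Q g y /\
   ((forall i, i \in Imset Q g B -> 0 < y i) -> (exists i, y i != xf Q g B i) ->
     qo Q g y' < qo Q g y).
Proof.
move=> [y0 yB] /set0Pn [k0 Hk0].
set x := xf Q g B.
set r := fun i => y i / (y i - x i).
have ImP : forall i, i \in Imset Q g B -> (i \notin B) && (x i <= 0).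
  by move=> i; rewrite Imset_eq inE.
have r01 : forall i, i \in Imset Q g B -> 0 <= r i <= 1.
  move=> i /ImP /andP [_ Hx]; rewrite /r.
  have [E|NE] := eqVneq (y i - x i) 0; first by rewrite E invr0 mulr0 lexx ler01.
  have P : 0 < y i - x i by rewrite lt_neqAle eq_sym NE /=; have := y0 i; lra.
  rewrite divr_ge0 ?y0 ?(ltW P) //= ler_pdivrMr // mul1r; lra.
have rmul : forall i, i \in Imset Q g B -> y i - r i * (y i - x i) = 0.
  move=> i /ImP /andP [_ Hx]; rewrite /r.
  have [E|NE] := eqVneq (y i - x i) 0; last by rewrite divfK // subrr.
  rewrite E mulr0 subr0; have := y0 i; lra.
case: (arg_minP r Hk0) => k Hk kmin.
exists k; split => //.
set t := r k.
have [t0 t1] : 0 <= t /\ t <= 1 by have /andP [] := r01 k Hk.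
set y' := fun i => y i + t * (x i - y i).
have xB : forall i, i \in B -> x i = 0 by move=> i; apply: xf_B.
exists y'; split.
  split.
    move=> i; rewrite /y'.
    case: (boolP (i \in B)) => HB; first by rewrite yB // xB // subrr mulr0 addr0.
    case: (boolP (x i <= 0)) => Hx; last first.
      have := y0 i; rewrite -ltNge in Hx; nra.
    have Hi : i \in Imset Q g B by rewrite Imset_eq inE HB Hx.
    have := rmul i Hi; have := kmin i Hi; rewrite -/t => tr.
    have := y0 i; have Hd : 0 <= y i - x i by have := y0 i; lra.
    have : t * (y i - x i) <= r i * (y i - x i) by rewrite ler_wpM2r.
    lra.
  move=> i; rewrite in_setU1 => /orP [/eqP -> | HB].
    by rewrite /y'; have := rmul k Hk; rewrite -/t => E; lra.
  by rewrite /y' yB // xB // subrr mulr0 addr0.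
have y'B : forall i, i \in B -> y' i = 0.
  by move=> i HB; rewrite /y' yB // xB // subrr mulr0 addr0.
have Ed : (fun i => y' i - x i) = (fun i => (1 - t) * (y i - x i)).
  by apply: funext => i; rewrite /y'; ring.
rewrite (q_ident g Qpd Qsym yB) (q_ident g Qpd Qsym y'B) -/x Ed qf_scale.
set D := qf Q (fun i => y i - x i).
have D0 : 0 <= D by apply: (qf_ge0 Qpd).
split.
  rewrite lerD2l ler_pM2r // -[X in _ <= X]mul1r; apply: ler_wpM2r => //.
  rewrite expr2; nra.
move=> ypos [i Hi].
have Dp : 0 < D by apply: (qf_pos Qpd (i0 := i)); rewrite subr_eq0.
have tp : 0 < t.
  rewrite /t /r; have := ypos k Hk; have /ImP /andP [_ Hx] := Hk => yk.
  apply: divr_gt0 => //; lra.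
rewrite ltrD2l ltr_pM2r // -[X in _ < X]mul1r ltr_pM2r // expr2; nra.
Qed.

End LS.

Section Reach.
Variables (R : realType) (n : nat) (Q : 'M[R]_n) (g : 'cV[R]_n) (tol : R).

Definition mv (B B' : {set 'I_n}) :=
  ((B :\: B') :|: (B' :\: B)) \subset (Imset Q g B :|: Amset Q g tol B).

Fixpoint reach k B := ras_stop Q g tol B ||
  (if k is k'.+1 then [exists B', mv B B' && reach k' B'] else false).

Lemma reachS k B : reach k B -> reach k.+1 B.
Proof.
elim: k B => [|k IH] B /=; first by rewrite orbF => ->.
case/orP => [-> // | /existsP [B' /andP [H1 H2]]].
by apply/orP; right; apply/existsP; exists B'; apply/andP; split => //; exact: IH.
Qed.

Lemma reach_step k B B' : mv B B' -> reach k B' -> reach k.+1 B.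
Proof. by move=> H1 H2 /=; apply/orP; right; apply/existsP; exists B'; rewrite H1 H2. Qed.

Lemma mv_add B k : k \in Imset Q g B -> mv B (k |: B).
Proof.
move=> Hk; apply/fintype.subsetP => x; rewrite !inE.
case/orP => /andP [H1 H2].
  by move: H1; rewrite H2 orbT.
by move: H1; case/orP: H2 => [/eqP -> | ->] //; rewrite Hk.
Qed.

Lemma mv_del B j : j \in Amset Q g tol B -> mv B (B :\ j).
Proof.
move=> Hj; apply/fintype.subsetP => x; rewrite !inE.
case/orP => /andP [H1 H2].
  by move: H1; rewrite H2 andbT negbK => /eqP E; subst x; move: Hj; rewrite inE => /andP [_ ->]; rewrite orbT.
by move: H2; rewrite (negbTE H1) andbF.
Qed.


Hypothesis Qpd : forall v : 'cV[R]_n, v != 0 -> 0 < (v^T *m Q *m v) 0 0.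
Hypothesis Qsym : Q^T = Q.
Hypothesis tol0 : 0 <= tol.

Definition mu (v : R) := #|[set C : {set 'I_n} | qo Q g (xf Q g C) <= v]|.

Lemma mu_le v w : v <= w -> (mu v <= mu w)%N.
Proof.
move=> vw; apply: subset_leq_card; apply/fintype.subsetP => C; rewrite !inE => H.
exact: le_trans H vw.
Qed.

Lemma mu_lt v w (B : {set 'I_n}) : v < qo Q g (xf Q g B) -> qo Q g (xf Q g B) <= w ->
  (mu v < mu w)%N.
Proof.
move=> H1 H2; apply: proper_card; apply/properP; split.
  apply/fintype.subsetP => C; rewrite !inE => H.
  by apply: le_trans H _; apply: le_trans (ltW H1) H2.
by exists B; rewrite !inE // -ltNge.
Qed.

Lemma cardB (B : {set 'I_n}) : (#|B| <= n)%N.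
Proof. by rewrite -[X in (_ <= X)%N]card_ord max_card. Qed.

Lemma main_reach w : forall B y, feas B y ->
  (mu (qo Q g y) * n.+1 + (n - #|B|) <= w)%N -> reach (2 * w) B.
Proof.
elim: w => [|w IH] B y Fy HW.
  have : (0 < mu (qo Q g y))%N.
    rewrite card_gt0; apply/set0Pn; exists B; rewrite inE; exact: (J_le g Qpd Qsym Fy).
  move: HW; set a := mu _; nia.
rewrite (_ : (2 * w.+1 = (2 * w).+2)%N); last by lia.
case Hs: (ras_stop Q g tol B); first by rewrite /= Hs.
have HyJ := J_le g Qpd Qsym Fy.
case: (eqVneq (Imset Q g B) finset.set0) => HIm; last first.
  have [k [Hk [y' [Fy' [Hle _]]]]] := line_search Qpd Qsym Fy HIm.
  have kB : k \notin B by move: Hk; rewrite Imset_eq inE => /andP [].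
  have c1 : #|k |: B| = #|B|.+1 by rewrite cardsU1 kB.
  have c2 := cardB (k |: B).
  have m1 := mu_le Hle.
  have := IH _ _ Fy'.
  move: HW; rewrite c1 in c2 *; set a := mu (qo Q g y); set b := mu (qo Q g y') => HW.
  have m2 : (b * n.+1 <= a * n.+1)%N by rewrite leq_mul2r m1 orbT.
  move=> /(_ ltac:(lia)) H; apply: reachS; apply: reach_step (mv_add Hk) H.
have : Amset Q g tol B != finset.set0.
  by move: Hs; rewrite /ras_stop HIm finset.set0U => /negbT.
case/set0Pn => j Hj.
have [HjB Hsj] : j \in B /\ sA Q g B j < - tol by move: Hj; rewrite inE => /andP.
have xpos : forall i, i \notin B -> 0 < xf Q g B i.
  move=> i Hi; rewrite ltNge; apply/negP => Hx.
  have : i \in Imset Q g B by rewrite Imset_eq inE Hi Hx.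
  by rewrite HIm inE.
set B1 := B :\ j.
have jB1 : j \notin B1 by rewrite !inE eqxx.
have B1B : forall i, i \in B1 -> i \in B by move=> i; rewrite !inE => /andP [].
have F1 : exists i, xf Q g B i != xf Q g B1 i.
  case: (pickP (fun i => xf Q g B i != xf Q g B1 i)) => [i Hi | H]; first by exists i.
  have E : grad Q g B1 j = grad Q g B j.
    rewrite /grad; congr (_ + _); apply eq_bigr => i _.
    by move/negbFE/eqP: (H i) => ->.
  move: Hsj; rewrite sA_grad -E grad_off // => h; exfalso; move: h; by rewrite oppr_gt0 ltNge tol0.
have F2 : 0 < xf Q g B1 j.
  set d := fun i => xf Q g B1 i - xf Q g B i.
  have E1 : forall i, \sum_k Q i k * d k = grad Q g B1 i - grad Q g B i.
    move=> i; rewrite /grad /d; under eq_bigr do rewrite mulrBr.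
    rewrite sumrB; ring.
  have E2 : qf Q d = \sum_i d i * (\sum_k Q i k * d k).
    rewrite /qf; apply eq_bigr => i _; rewrite big_distrr; apply eq_bigr => k _ /=; ring.
  have E3 : \sum_i d i * (grad Q g B1 i - grad Q g B i) = d j * (- grad Q g B j).
    rewrite (bigD1 j) //= big1 ?addr0; first by rewrite grad_off // sub0r.
    move=> i Hij; case: (boolP (i \in B)) => HiB.
      have HiB1 : i \in B1 by rewrite !inE Hij HiB.
      by rewrite /d !xf_B // subrr mul0r.
    have HiB1 : i \notin B1 by apply/negP => /B1B; rewrite (negbTE HiB).
    by rewrite !grad_off // subrr mulr0.
  have [i Hi] := F1.
  have Dp : 0 < qf Q d by apply: (qf_pos Qpd (i0 := i)); rewrite /d subr_eq0 eq_sym.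
  move: Dp; rewrite E2; under eq_bigr do rewrite E1; rewrite E3 /d (@xf_B _ _ Q g _ _ HjB) subr0.
  rewrite -sA_grad => P; have Ps : 0 < - sA Q g B j by rewrite oppr_gt0; apply: lt_le_trans Hsj _; rewrite oppr_le0.
  by move: P; rewrite pmulr_lgt0.
have F3 : qo Q g (xf Q g B1) < qo Q g (xf Q g B).
  have zB1 : forall i, i \in B1 -> xf Q g B i = 0 by move=> i /B1B; apply: xf_B.
  rewrite (q_ident g Qpd Qsym zB1) ltrDl; apply: divr_gt0 => //.
  have [i Hi] := F1; apply: (qf_pos Qpd (i0 := i)); by rewrite subr_eq0.
have Fx : feas B1 (xf Q g B).
  split; last by move=> i /B1B; apply: xf_B.
  by move=> i; case: (boolP (i \in B)) => HiB; [rewrite xf_B | apply/ltW/xpos].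
have c2 := cardB B1.
case: (eqVneq (Imset Q g B1) finset.set0) => HIm1.
  have Fy1 : feas B1 (xf Q g B1).
    split; last by move=> i; apply: xf_B.
    move=> i; case: (boolP (i \in B1)) => HiB; first by rewrite xf_B.
    rewrite leNgt; apply/negP => Hx.
    have : i \in Imset Q g B1 by rewrite Imset_eq inE HiB (ltW Hx).
    by rewrite HIm1 inE.
  have m1 : (mu (qo Q g (xf Q g B1)) < mu (qo Q g y))%N by apply: (mu_lt (B := B)).
  have := IH _ _ Fy1.
  move: HW; set a := mu (qo Q g y); set b := mu (qo Q g (xf Q g B1)) => HW.
  have m2 : (b.+1 * n.+1 <= a * n.+1)%N by rewrite leq_mul2r m1 orbT.
  move=> /(_ ltac:(nia)) H; apply: reachS; apply: reach_step (mv_del Hj) H.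
have [k [Hk [y' [Fy' [_ Hstr]]]]] := line_search Qpd Qsym Fx HIm1.
have Hlt : qo Q g y' < qo Q g (xf Q g B).
  apply: Hstr => //.
  move=> i; rewrite Imset_eq inE => /andP [HiB1 Hx].
  have Hij : i != j by apply/negP => /eqP E; move: Hx; rewrite E leNgt F2.
  apply: xpos; apply/negP => HiB; move: HiB1; by rewrite !inE Hij HiB.
have m1 : (mu (qo Q g y') < mu (qo Q g y))%N by apply: (mu_lt (B := B)).
have c3 := cardB (k |: B1).
have := IH _ _ Fy'.
move: HW; set a := mu (qo Q g y); set b := mu (qo Q g y') => HW.
have m2 : (b.+1 * n.+1 <= a * n.+1)%N by rewrite leq_mul2r m1 orbT.
move=> /(_ ltac:(nia)) H.
apply: reach_step (mv_del Hj) _; apply: reach_step (mv_add Hk) H.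
Qed.

Lemma det_reach : exists N, forall B, reach N B.
Proof.
exists (2 * (#|{set 'I_n}| * n.+1 + n))%N => B.
apply: (main_reach (y := fun _ => 0)).
  by split.
have := max_card (mem [set C : {set 'I_n} | qo Q g (xf Q g C) <= qo Q g (fun _ => 0)]).
rewrite /mu; set a := #|_|; set b := #|_|.
have m2 : forall a b, (a <= b -> a * n.+1 <= b * n.+1)%N by move=> ? ? H; rewrite leq_mul2r H orbT.
move=> /m2 H; apply: leq_add; [exact: H | exact: leq_subr].
Qed.

End Reach.

Section Trans.
Variables (R : realType) (n : nat) (Q : 'M[R]_n) (g : 'cV[R]_n) (tol : R).

Definition sd (A B : {set 'I_n}) := (A :\: B) :|: (B :\: A).

Lemma sdK A : cancel (sd A) (sd A).
Proof.
move=> S; apply/setP => i; rewrite !inE.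
by case: (i \in A); case: (i \in S).
Qed.

Lemma trans_ge0 p A A' : (forall i, 0 <= p i <= 1) ->
  0 <= ras_trans Q g tol p A A'.
Proof.
move=> Hp; rewrite /ras_trans /=; case: ifP => // _.
apply: prodr_ge0 => i _; case: ifP => _; have := Hp i; lra.
Qed.

Lemma prod_subset (D : {set 'I_n}) (p : 'I_n -> R) :
  \sum_(S : {set 'I_n}) (if S \subset D then
      \prod_(j in D) (if j \in S then p j else 1 - p j) else 0) = 1.
Proof.
set c := fun (i : 'I_n) (b : bool) =>
  if i \in D then (if b then p i else 1 - p i) else (if b then 0 else 1).
have E1 : \prod_(i : 'I_n) \sum_(b : bool) c i b = 1.
  apply: big1 => i _; rewrite big_bool /c; case: (i \in D) => /=; ring.
rewrite -[RHS]E1 bigA_distr_bigA /=.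
have hbij : bijective (fun S : {set 'I_n} => [ffun i => i \in S]).
  exists (fun f : {ffun 'I_n -> bool} => [set i | f i]).
    by move=> S; apply/setP => i; rewrite inE ffunE.
  by move=> f; apply/ffunP => i; rewrite ffunE inE.
rewrite (reindex _ (onW_bij _ hbij)) /=.
apply: eq_bigr => S _.
rewrite [RHS](bigID (mem D)) /=.
have -> : \prod_(i | i \in D) c i ([ffun i0 => i0 \in S] i) =
          \prod_(j in D) (if j \in S then p j else 1 - p j).
  by apply: eq_bigr => i HiD; rewrite ffunE /c HiD.
case: ifP => HS.
  rewrite [X in _ * X]big1 ?mulr1 // => i HiD; rewrite ffunE /c (negbTE HiD).
  case: ifP => // HiS; move/fintype.subsetP: HS => /(_ i HiS); by rewrite (negbTE HiD).
have [i HiS HiD] : exists2 i, i \in S & i \notin D.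
  by apply/fintype.subsetPn; rewrite HS.
by rewrite [X in _ * X](bigD1 i) //= ffunE /c (negbTE HiD) HiS mul0r mulr0.
Qed.

Lemma trans_sum p A : \sum_A' ras_trans Q g tol p A A' = 1.
Proof.
rewrite (reindex_inj (can_inj (sdK A))) /=.
rewrite -[RHS](prod_subset (Imset Q g A :|: Amset Q g tol A) p).
apply: eq_bigr => S _; rewrite /ras_trans /=.
by rewrite -/(sd A (sd A S)) sdK.
Qed.

Lemma trans_lb (sigma : R) p A A' : 0 <= sigma <= 1 ->
  (forall i, sigma <= p i <= 1 - sigma) -> mv Q g tol A A' ->
  sigma ^+ n <= ras_trans Q g tol p A A'.
Proof.
move=> /andP [s0 s1] Hp Hmv; rewrite /ras_trans /=.
move: Hmv; rewrite /mv => ->.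
apply: le_trans (_ : sigma ^+ #|Imset Q g A :|: Amset Q g tol A| <= _).
  apply: ler_wiXn2l => //; exact: cardB.
rewrite -prodr_const; apply: ler_prod => i _; rewrite s0 /=.
case: ifP => _; have := Hp i; lra.
Qed.

End Trans.

Unset Implicit Arguments.
Local Open Scope classical_set_scope.
Local Open Scope ring_scope.

Section Surv.
Variables (R : realType) (n : nat) (Q : 'M[R]_n) (g : 'cV[R]_n) (tol sigma : R)
  (strat : seq {set 'I_n} -> {set 'I_n} -> 'I_n -> R).
Hypothesis s0 : 0 < sigma.
Hypothesis s1 : sigma <= 1 / 2.
Hypothesis Hst : forall h A i, sigma <= strat h A i <= 1 - sigma.

Lemma p01 h A i : 0 <= strat h A i <= 1.
Proof. have s0' := s0. have := Hst h A i; move=> /andP [H1 H2]; apply/andP; split; lra. Qed.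
Let surv := ras_surv Q g tol strat.



Lemma surv_ge0 k : forall h A, 0 <= surv k h A.
Proof.
elim: k => [|k IH] h A /=; rewrite /surv /=; case: ifP => // _.
apply: sumr_ge0 => A' _; apply: mulr_ge0; [exact: trans_ge0 (p01 h A) | exact: IH].
Qed.

Lemma surv_le1 k : forall h A, surv k h A <= 1.
Proof.
elim: k => [|k IH] h A /=; rewrite /surv /=; case: ifP => // _.
rewrite -[X in _ <= X](trans_sum Q g tol (strat h A) A).
apply: ler_sum => A' _; rewrite -[X in _ <= X]mulr1; apply: ler_wpM2l.
  exact: trans_ge0 (p01 h A).
exact: IH.
Qed.

Let del := sigma ^+ n.

Lemma del01 : 0 < del <= 1.
Proof. have s1' := s1. rewrite exprn_gt0 //= exprn_ile1 //; [exact: ltW | lra]. Qed.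

Lemma surv_reach j : forall (M : R) m, 0 <= M ->
  (forall h A k, (m <= k)%N -> surv k h A <= M) ->
  forall A, reach Q g tol j A -> forall h k, (j + m <= k)%N ->
  surv k h A <= (1 - del ^+ j) * M.
Proof.
have [d0 d1] : 0 < del /\ del <= 1 by have /andP [] := del01.
have dj : forall j, 0 <= del ^+ j <= 1.
  by move=> i; rewrite exprn_ge0 ?(ltW d0) //= exprn_ile1 // ltW.
elim: j => [|j IH] M m M0 HM A.
  rewrite /= orbF => Hs h k _; rewrite expr0 subrr mul0r.
  by rewrite /surv; case: k => [|k] /=; rewrite Hs.
move=> /orP [Hs | /existsP [A' /andP [Hmv HA']]] h k Hk.
  have Hs' : surv k h A = 0 by rewrite /surv; case: k Hk => [|k] _ /=; rewrite Hs.
  by rewrite Hs'; apply: mulr_ge0 => //; have := dj j.+1; lra.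
case: k Hk => [|k] // Hk.
rewrite /surv /=; case: ifP => _; first by apply: mulr_ge0 => //; have := dj j.+1; lra.
rewrite (bigD1 A') //=.
set t := ras_trans Q g tol (strat h A) A A'.
set T := \sum_(i | i != A') ras_trans Q g tol (strat h A) A i * _.
have Ht : t + \sum_(i | i != A') ras_trans Q g tol (strat h A) A i = 1.
  by rewrite /t -(trans_sum Q g tol (strat h A) A) [RHS](bigD1 A').
have tlb : del <= t.
  have s1' := s1; apply: (trans_lb (sigma := sigma) _ (Hst h A) Hmv).
  apply/andP; split; [exact: ltW | lra].
have HT : T <= \sum_(i | i != A') ras_trans Q g tol (strat h A) A i * M.
  apply: ler_sum => i _; apply: ler_wpM2l; first exact: trans_ge0 (p01 h A).
  by apply: HM; lia.
rewrite -big_distrl /= in HT.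
have H1 : ras_surv Q g tol strat k (rcons h A) A' <= (1 - del ^+ j) * M.
  by apply: (IH M m M0 HM A' HA'); lia.
have t0 : 0 <= t by apply: trans_ge0 (p01 h A).
have : t * ras_surv Q g tol strat k (rcons h A) A' <= t * ((1 - del ^+ j) * M).
  by apply: ler_wpM2l.
set S := \sum_(i | i != A') _ in Ht HT.
have e0 := dj j.
have X : 0 <= (t - del) * (del ^+ j * M).
  by apply: mulr_ge0; [lra | apply: mulr_ge0 => //; have := dj j; lra].
rewrite exprS; move: X; set e := del ^+ j.
move=> X Y; nra.
Qed.


Lemma surv_geom N : (forall B, reach Q g tol N B) ->
  forall i h A k, (i * N <= k)%N -> surv k h A <= (1 - del ^+ N) ^+ i.
Proof.
move=> HN; have [d0 d1] : 0 < del /\ del <= 1 by have /andP [] := del01.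
have c0 : 0 <= 1 - del ^+ N.
  by rewrite subr_ge0 exprn_ile1 // ltW.
elim=> [|i IH] h A k Hk; first by rewrite expr0; apply: surv_le1.
rewrite exprS. move: (surv_reach N) => /(_ _ _ _ IH A (HN A) h k) H; apply: H; last by move: Hk; rewrite mulSn.
exact: exprn_ge0.
Qed.

Lemma surv_lim N (A0 : {set 'I_n}) : (forall B, reach Q g tol N B) ->
  (fun k : nat => ras_surv Q g tol strat k [::] A0) @ \oo --> (0 : R^o).
Proof.
move=> HN; have [d0 d1] : 0 < del /\ del <= 1 by have /andP [] := del01.
set c := 1 - del ^+ N.
have c0 : 0 <= c by rewrite /c subr_ge0 exprn_ile1 // ltW.
have c1 : c < 1 by rewrite /c ltrBlDr ltrDl exprn_gt0.
have Hc : `|c| < 1 by rewrite ger0_norm.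
apply/cvgrPdist_le => eps epos.
have := (cvgrPdist_le _ _).1 (cvg_expr Hc) eps epos.
case=> i0 _ Hi0.
have := Hi0 i0 (leqnn i0); rewrite /= sub0r normrN ger0_norm ?exprn_ge0 // => Hci.
exists (i0 * N)%N => // k /= Hk.
rewrite sub0r normrN ger0_norm; last exact: surv_ge0.
exact: le_trans (surv_geom N HN i0 [::] A0 k Hk) Hci.
Qed.


End Surv.

Theorem theorem2p3 (R : realType) (n : nat) (Q : 'M[R]_n) (g : 'cV[R]_n)
  (sigma tol : R) (A0 : {set 'I_n})
  (strat : seq {set 'I_n} -> {set 'I_n} -> 'I_n -> R) :
  Q^T = Q ->
  (forall v : 'cV[R]_n, v != 0 -> 0 < (v^T *m Q *m v) 0 0) ->
  0 < sigma <= 1 / 2 ->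
  0 <= tol ->
  (forall h A i, sigma <= strat h A i <= 1 - sigma) ->
  (fun k : nat => ras_surv Q g tol strat k [::] A0) @ \oo --> (0 : R^o).
Proof.
move=> Qsym Qpd /andP [s0 s1] tol0 Hst.
have [N HN] := det_reach g Qpd Qsym tol0.
exact: (surv_lim R n Q g tol sigma strat s0 s1 Hst N A0 HN).
Qed.
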